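(* The QDP implementation of the Grover search using density matrix exponentiation generates a sequence of states $\rho_n\in\mathcal{S}_{\mathrm{rel}}$ for all $n\in\mathbb{N}$ whenever $\rho_0=\psi_0\in\mathcal{S}_{\mathrm{rel}}$.
   Context: $|\tau\rangle$ (target) and $|\psi_0\rangle$ (initial) are pure states, $\psi_0=|\psi_0\rangle\langle\psi_0|$; $\mathcal{H}_{\mathrm{rel}}=\mathrm{span}\{|\tau\rangle,|\tau^\perp\rangle\}$ with $|\tau^\perp\rangle\propto|\psi_0\rangle-\langle\tau|\psi_0\rangle|\tau\rangle$; $\mathcal{S}_{\mathrm{rel}}$ is the set of density matrices supported in $\mathcal{H}_{\mathrm{rel}}$. In the QDP implementation of the Grover search, each recursion step maps the current state $\rho_{n-1}$ to $\rho_n$ by a composition of (a) exact partial reflections about the target, $\sigma\mapsto E_s(\tau)\sigma E_s(\tau)^\dagger$ with $E_s(\tau)=\mathbf{1}-(1-e^{-is})|\tau\rangle\langle\tau|$, and (b) density matrix exponentiation channels $\hat E_s^{\rho_{n-1}}(\sigma)=\cos^2(s)\sigma-i\sin(s)\cos(s)[\rho_{n-1},\sigma]+\sin^2(s)\rho_{n-1}$ instructed by copies of $\rho_{n-1}$. *)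

(* Defs.v *)
From HB Require Import structures.
From mathcomp Require Import all_boot all_order all_algebra.
From mathcomp Require Import all_classical all_reals.
From mathcomp Require Import trigo.
From mathcomp Require Import complex.
Set Implicit Arguments. Unset Strict Implicit. Unset Printing Implicit Defensive.
Import Order.TTheory GRing.Theory Num.Theory.
Local Open Scope ring_scope.

Section QDP.
Variables (R : realType) (d : nat).
Local Notation C := (R[i]).

Definition adj m n (A : 'M[C]_(m, n)) : 'M[C]_(n, m) := (map_mx Num.conj A)^T.

Definition braket (u v : 'cV[C]_d) : C := (adj u *m v) ord0 ord0.

Definition unit_ket (v : 'cV[C]_d) : Prop := braket v v = 1.

Definition ketbra (u v : 'cV[C]_d) : 'M[C]_d := u *m adj v.

Definition density (rho : 'M[C]_d) : Prop :=
  [/\ adj rho = rho,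
      (forall v : 'cV[C]_d, 0 <= (adj v *m rho *m v) ord0 ord0)
    & \tr rho = 1].

(* |tau_perp> up to normalization: |psi0> - <tau|psi0>|tau> *)
Definition tau_perp (tau psi0 : 'cV[C]_d) : 'cV[C]_d :=
  psi0 - braket tau psi0 *: tau.

Definition in_Hrel (tau psi0 v : 'cV[C]_d) : Prop :=
  exists a b : C, v = a *: tau + b *: tau_perp tau psi0.

(* S_rel: density matrices supported in H_rel (range, i.e. every column, lies in H_rel) *)
Definition S_rel (tau psi0 : 'cV[C]_d) (rho : 'M[C]_d) : Prop :=
  density rho /\ forall j : 'I_d, in_Hrel tau psi0 (col j rho).

Definition expi (s : R) : C := Complex (cos s) (sin s).

Definition Erefl (s : R) (tau : 'cV[C]_d) : 'M[C]_d :=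
  1%:M - (1 - expi (- s)) *: ketbra tau tau.

Definition refl_channel (s : R) (tau : 'cV[C]_d) (sigma : 'M[C]_d) : 'M[C]_d :=
  Erefl s tau *m sigma *m adj (Erefl s tau).

Definition dme_channel (s : R) (rho sigma : 'M[C]_d) : 'M[C]_d :=
  ((cos s) ^+ 2)%:C%C *: sigma
  - (Complex 0 1 * (sin s * cos s)%:C%C) *: (rho *m sigma - sigma *m rho)
  + ((sin s) ^+ 2)%:C%C *: rho.

Inductive qdp_op := Refl of R | DME of R.

Definition apply_op (tau : 'cV[C]_d) (instr : 'M[C]_d) (o : qdp_op)
    (sigma : 'M[C]_d) : 'M[C]_d :=
  match o with
  | Refl s => refl_channel s tau sigma
  | DME s => dme_channel s instr sigma
  end.

(* apply the list of operations, first element first *)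
Definition apply_ops (tau : 'cV[C]_d) (instr : 'M[C]_d) (os : seq qdp_op)
    (sigma : 'M[C]_d) : 'M[C]_d :=
  foldl (fun acc o => apply_op tau instr o acc) sigma os.

(* QDP recursion: rho_0 = psi0, rho_n = (composition sched n)(rho_{n-1}),
   with all DME channels instructed by copies of rho_{n-1}. *)
Fixpoint qdp_state (tau psi0 : 'cV[C]_d) (sched : nat -> seq qdp_op) (n : nat)
    : 'M[C]_d :=
  match n with
  | 0 => ketbra psi0 psi0
  | k.+1 => let rho := qdp_state tau psi0 sched k in
            apply_ops tau rho (sched k.+1) rho
  end.

End QDP.

(* Main.v *)
Require Import Defs.
From HB Require Import structures.
From mathcomp Require Import all_boot all_order all_algebra.
From mathcomp Require Import all_classical all_reals.
From mathcomp Require Import trigo.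
From mathcomp Require Import complex.
From mathcomp Require Import ring lra.
Set Implicit Arguments. Unset Strict Implicit. Unset Printing Implicit Defensive.
Import Order.TTheory GRing.Theory Num.Theory.
Local Open Scope ring_scope.

Section S.
Variable R : realType.
Local Notation C := (R[i]).

Lemma adjE m n (A : 'M[C]_(m, n)) i j : adj A i j = (A j i)^*.
Proof. by rewrite /adj !mxE. Qed.

Lemma adjK m n (A : 'M[C]_(m, n)) : adj (adj A) = A.
Proof. by apply/matrixP => i j; rewrite !adjE conjCK. Qed.

Lemma adjM m n p (A : 'M[C]_(m, n)) (B : 'M[C]_(n, p)) :
  adj (A *m B) = adj B *m adj A.
Proof.
apply/matrixP => i j; rewrite /adj !mxE rmorph_sum; apply: eq_bigr => k _.
by rewrite !mxE rmorphM mulrC.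
Qed.

Lemma adjD m n (A B : 'M[C]_(m, n)) : adj (A + B) = adj A + adj B.
Proof. by apply/matrixP => i j; rewrite /adj !mxE rmorphD. Qed.

Lemma adjN m n (A : 'M[C]_(m, n)) : adj (- A) = - adj A.
Proof. by apply/matrixP => i j; rewrite /adj !mxE rmorphN. Qed.

Lemma adjB m n (A B : 'M[C]_(m, n)) : adj (A - B) = adj A - adj B.
Proof. by rewrite adjD adjN. Qed.

Lemma adjZ m n a (A : 'M[C]_(m, n)) : adj (a *: A) = a^* *: adj A.
Proof. by apply/matrixP => i j; rewrite /adj !mxE rmorphM. Qed.

Lemma adj1 n : adj (1%:M : 'M[C]_n) = 1%:M.
Proof. by apply/matrixP => i j; rewrite /adj !mxE eq_sym; case: eqP; rewrite ?conjC0 ?conjC1. Qed.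

Variable d : nat.
Definition q (M : 'M[C]_d) (x y : 'cV[C]_d) := (adj x *m M *m y) ord0 ord0.

Lemma qJ M x y : adj M = M -> (q M x y)^* = q M y x.
Proof.
move=> hM; rewrite /q.
have -> : forall A : 'M[C]_1, (A ord0 ord0)^* = adj A ord0 ord0 by move=> A; rewrite /adj !mxE.
by rewrite !adjM adjK hM mulmxA.
Qed.

Lemma q_lin M a b x y z : q M (a *: x + b *: y) z = a^* * q M x z + b^* * q M y z.
Proof.
by rewrite /q adjD !adjZ !mulmxDl -!scalemxAl !mxE.
Qed.

Lemma q_linr M a b x y z : q M z (a *: x + b *: y) = a * q M z x + b * q M z y.
Proof.
by rewrite /q !mulmxDr -!scalemxAr !mxE.
Qed.

Lemma q_exp M a b x y :
  q M (a *: x + b *: y) (a *: x + b *: y) =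
  a^* * a * q M x x + a^* * b * q M x y + b^* * a * q M y x + b^* * b * q M y y.
Proof. rewrite q_lin !q_linr; ring. Qed.

Definition psd (M : 'M[C]_d) := forall v, 0 <= q M v v.

Lemma cs_pos M x y : adj M = M -> psd M -> 0 < q M y y ->
  `|q M x y| ^+ 2 <= q M x x * q M y y.
Proof.
move=> hM hP hb.
set al := q M x x; set be := q M y y; set ga := q M y x.
have hxy : q M x y = ga^* by rewrite /ga qJ.
have hbr : be^* = be by apply: conj_Creal; apply: gtr0_real.
have := hP (be *: x + (- ga) *: y).
rewrite q_exp hxy -/al -/be -/ga hbr rmorphN.
have -> : be * be * al + be * - ga * ga^* + - ga^* * be * ga + - ga^* * - ga * be
   = be * (be * al - ga * ga^*) by ring.
by rewrite pmulr_rge0 // subr_ge0 norm_conjC normCK [be * _]mulrC.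
Qed.

Lemma cs M x y : adj M = M -> psd M ->
  `|q M x y| ^+ 2 <= q M x x * q M y y.
Proof.
move=> hM hP.
have := hP y; rewrite le0r => /orP [/eqP b0 | bpos]; last exact: cs_pos.
have := hP x; rewrite le0r => /orP [/eqP a0 | apos].
  set ga := q M y x.
  have hxy : q M x y = ga^* by rewrite /ga qJ.
  have := hP (1 *: x + (- ga) *: y).
  rewrite q_exp hxy -/ga a0 b0 rmorphN conjC1 => h.
  have h2 : ga * ga^* + ga^* * ga <= 0.
    rewrite -oppr_ge0; apply: (le_trans h); rewrite le_eqVlt; apply/orP; left; apply/eqP; ring.
  have h1 : 0 <= ga * ga^* by apply: mul_conjC_ge0.
  rewrite mulr0 norm_conjC normCK; apply: le_trans h2.
  by rewrite [ga^* * ga]mulrC lerDl.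
have := cs_pos y hM hP apos.
by rewrite -(qJ y x hM) norm_conjC mulrC.
Qed.

Lemma ge0_RC (z : C) : 0 <= z -> z = (complex.Re z)%:C%C.
Proof. by case: z => a b; rewrite lecE /= => /andP [/eqP -> _]. Qed.

Lemma ge0_Re (z : C) : 0 <= z -> 0 <= complex.Re z.
Proof. by move=> h; move: (h); rewrite (ge0_RC h) lecR. Qed.

Lemma micro (P A B : C) : 0 <= P -> 0 <= A -> 0 <= B -> P ^+ 2 <= A * B ->
  P *+ 2 <= A + B.
Proof.
move=> hP hA hB; have hP' := ge0_Re hP; have hA' := ge0_Re hA; have hB' := ge0_Re hB.
rewrite (ge0_RC hP) (ge0_RC hA) (ge0_RC hB).
rewrite -rmorphXn -rmorphM -rmorphMn -rmorphD !lecR => h.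
set p := complex.Re P in h hP' *; set a := complex.Re A in h hA' *; set b := complex.Re B in h hB' *.
rewrite mulr2n; have hab : 0 <= (a - b) ^+ 2 by apply: sqr_ge0.
rewrite leNgt; apply/negP => hlt.
have h1 : (a + b) ^+ 2 < (p + p) ^+ 2.
  by rewrite ltr_pXn2r // ?nnegrE; clear hP hA hB; nra.
clear hP hA hB; nra.
Qed.

Lemma q1 x : q 1%:M x x = \sum_j (x j ord0)^* * x j ord0.
Proof. by rewrite /q mulmx1 !mxE; apply: eq_bigr => j _; rewrite /adj !mxE. Qed.

Lemma q_sum M x : q M x x = \sum_j (adj x *m M) ord0 j * x j ord0.
Proof. by rewrite /q mxE. Qed.

Lemma q_deltar M x j : q M x (delta_mx j ord0) = (adj x *m M) ord0 j.
Proof.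
rewrite /q mxE (bigD1 j) //= big1 ?addr0; first by rewrite !mxE !eqxx mulr1.
by move=> k hk; rewrite !mxE (negbTE hk) mulr0.
Qed.

Lemma adj_delta j : adj (delta_mx j ord0 : 'cV[C]_d) = delta_mx ord0 j.
Proof.
apply/matrixP => a b; rewrite /adj !mxE; case: (a == ord0); case: (b == j) => /=;
  by rewrite ?conjC1 ?conjC0.
Qed.

Lemma q_delta M j : q M (delta_mx j ord0) (delta_mx j ord0) = M j j.
Proof.
rewrite q_deltar adj_delta mxE (bigD1 j) //= big1 ?addr0; first by rewrite !mxE !eqxx mul1r.
by move=> k hk; rewrite !mxE (negbTE hk) andbF mul0r.
Qed.

Lemma le1 M x : adj M = M -> psd M -> \tr M = 1 -> q M x x <= q 1%:M x x.
Proof.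
move=> hM hP htr.
set t := q M x x.
have ht : 0 <= t := hP x.
have key : forall j, (`|(adj x *m M) ord0 j| * `|x j ord0|) *+ 2 <= t * M j j + `|x j ord0| ^+ 2.
  move=> j; apply: micro.
  - by rewrite mulr_ge0.
  - by rewrite mulr_ge0 // -q_delta; apply: hP.
  - exact: exprn_ge0 (normr_ge0 _).
  - rewrite exprMn; have := cs x (delta_mx j ord0) hM hP; rewrite q_deltar q_delta => h.
    by rewrite ler_wpM2r // exprn_ge0.
have h2 : t *+ 2 <= t + q 1%:M x x.
  have -> : t + q 1%:M x x = \sum_j (t * M j j + `|x j ord0| ^+ 2).
    rewrite big_split /= -mulr_sumr.
    have -> : \sum_j M j j = \tr M by [].
    rewrite htr mulr1 q1; congr (_ + _); apply: eq_bigr => j _; by rewrite normCKC.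
  apply: le_trans (ler_sum _ (fun j _ => key j)).
  rewrite sumrMnl lerMn2r /=.
  rewrite -{1}(ger0_norm ht) /t q_sum.
  apply: le_trans (ler_norm_sum _ _ _) _.
  by apply: ler_sum => j _; rewrite normrM.
by move: h2; rewrite mulr2n lerD2l.
Qed.

Lemma final_ineq (a b n X : C) (c s : R) :
  0 <= a -> 0 <= b -> 0 <= n -> `|X| ^+ 2 <= n * a -> n ^+ 2 <= b * n ->
  0 <= (c ^+ 2)%:C%C * a - (Complex 0 1 * (s * c)%:C%C) * (X - X^*) + (s ^+ 2)%:C%C * b.
Proof.
move=> ha hb hn; have ha' := ge0_Re ha; have hb' := ge0_Re hb; have hn' := ge0_Re hn.
rewrite (ge0_RC ha) (ge0_RC hb) (ge0_RC hn).
set a' := complex.Re a in ha' *; set b' := complex.Re b in hb' *; set n' := complex.Re n in hn' *.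
rewrite -add_Re2_Im2 -rmorphM -rmorphXn -rmorphM !lecR.
case: X => x y /= h1 h2.
rewrite lecE /=; apply/andP; split; first by apply/eqP; ring.
clear ha hb hn.
have hnb : n' <= b'.
  rewrite leNgt; apply/negP => hlt; nra.
have hy : y ^+ 2 <= a' * b' by nra.
set u := c ^+ 2 * a' + s ^+ 2 * b'.
set w := (s * c) * (y + y).
have hu : 0 <= u by rewrite /u; apply: addr_ge0; apply: mulr_ge0; rewrite ?sqr_ge0.
have hsq : w ^+ 2 <= u ^+ 2.
  rewrite /u /w.
  have e : (c ^+ 2 * a' + s ^+ 2 * b') ^+ 2 - (s * c * (y + y)) ^+ 2
     = (c ^+ 2 * a' - s ^+ 2 * b') ^+ 2 + 4%:R * (s * c) ^+ 2 * (a' * b' - y ^+ 2) by ring.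
  rewrite -subr_ge0 e; apply: addr_ge0; first exact: sqr_ge0.
  apply: mulr_ge0; first by apply: mulr_ge0; rewrite ?sqr_ge0 ?ler0n.
  by rewrite subr_ge0.
have -> : c ^+ 2 * a' - 0 * 0 - ((0 * (s * c) - 1 * 0) * (x - x) - (0 * 0 + 1 * (s * c)) * (y - - y)) +
   (s ^+ 2 * b' - 0 * 0) = u + w by rewrite /u /w; ring.
rewrite leNgt; apply/negP => hlt.
have hw : w < - u by rewrite -subr_lt0 opprK addrC.
nra.
Qed.

Lemma qMD A B x y : q (A + B) x y = q A x y + q B x y.
Proof. by rewrite /q mulmxDr mulmxDl mxE. Qed.
Lemma qMN A x y : q (- A) x y = - q A x y.
Proof. by rewrite /q mulmxN mulNmx mxE. Qed.
Lemma qMB A B x y : q (A - B) x y = q A x y - q B x y.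
Proof. by rewrite qMD qMN. Qed.
Lemma qMZ a A x y : q (a *: A) x y = a * q A x y.
Proof. by rewrite /q -scalemxAr -scalemxAl mxE. Qed.

Lemma q_conj (B M : 'M[C]_d) x y : q (B *m M *m adj B) x y = q M (adj B *m x) (adj B *m y).
Proof. by rewrite /q adjM adjK !mulmxA. Qed.

Lemma psd1 : psd 1%:M.
Proof.
move=> w; rewrite q1; apply: sumr_ge0 => j _; rewrite -normCKC; exact: exprn_ge0 (normr_ge0 _).
Qed.

Definition dens (M : 'M[C]_d) := [/\ adj M = M, psd M & \tr M = 1].

Lemma dme_psd s rho sig : dens rho -> dens sig -> psd (dme_channel s rho sig).
Proof.
move=> [hr pr tr] [hs ps ts] v.
rewrite /dme_channel qMD qMB !qMZ qMB.
have eX : q (rho *m sig) v v = q sig (rho *m v) v by rewrite /q adjM hr !mulmxA.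
have eY : q (sig *m rho) v v = (q sig (rho *m v) v)^* by rewrite qJ // /q !mulmxA.
rewrite eX eY.
have en : q 1%:M (rho *m v) (rho *m v) = q rho v (rho *m v) by rewrite /q adjM hr mulmx1 !mulmxA.
have hn : 0 <= q 1%:M (rho *m v) (rho *m v) by apply: psd1.
apply: (final_ineq (n := q 1%:M (rho *m v) (rho *m v))) => //.
- apply: le_trans (cs _ _ hs ps) _.
  apply: ler_wpM2r; first exact: ps.
  exact: le1.
- set n := q 1%:M (rho *m v) (rho *m v) in hn en *.
  have -> : n ^+ 2 = `|q rho v (rho *m v)| ^+ 2 by rewrite -en ger0_norm.
  apply: le_trans (cs _ _ hr pr) _.
  apply: ler_wpM2l; first exact: pr.
  exact: le1.
Qed.

Lemma conjRC (r : R) : (r%:C%C : C)^* = r%:C%C.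
Proof. by apply: conj_Creal; apply/complex_realP; exists r. Qed.

Lemma conj_i_r (r : R) : (Complex 0 1 * r%:C%C : C)^* = - (Complex 0 1 * r%:C%C).
Proof. change (conjc (Complex 0 1 * r%:C%C) = - (Complex 0 1 * r%:C%C)).
apply/eqP; rewrite eq_complex /= eqxx andbT; apply/eqP; ring. Qed.

Lemma conjE (z : C) : z^* = conjc z.
Proof. by []. Qed.

Lemma trB (A B : 'M[C]_d) : \tr (A - B) = \tr A - \tr B.
Proof. by rewrite /mxtrace -sumrB; apply: eq_bigr => i _; rewrite !mxE. Qed.

Lemma dme_dens s rho sig : dens rho -> dens sig -> dens (dme_channel s rho sig).
Proof.
move=> hr hs; have := dme_psd s hr hs; case: hr => [hr pr tr]; case: hs => [hs ps ts] hp.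
split => //.
- rewrite /dme_channel !adjD !adjN !adjZ !adjB !adjM hr hs conjRC conjRC conj_i_r.
  rewrite scaleNr opprK -scalerN opprB; done.
- rewrite /dme_channel mxtraceD trB !mxtraceZ trB mxtrace_mulC subrr.
  by rewrite tr ts mulr0 subr0 !mulr1 -rmorphD cos2Dsin2.
Qed.

Lemma unitE (tau : 'cV[C]_d) : unit_ket tau -> adj tau *m tau = 1%:M.
Proof.
by move=> h; apply/matrixP => i j; rewrite !ord1 -[LHS]/(braket tau tau) h mxE eqxx.
Qed.

Lemma expiJ (t : R) : (expi t)^* * expi t = 1 :> C.
Proof.
rewrite conjE /expi; apply/eqP; rewrite eq_complex /= mulNr opprK -!expr2 cos2Dsin2 eqxx /=.
by apply/eqP; ring.
Qed.

Lemma Erefl_unitary (s : R) (tau : 'cV[C]_d) : unit_ket tau -> adj (Erefl s tau) *m Erefl s tau = 1%:M.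
Proof.
move=> ht; rewrite /Erefl.
set k := 1 - expi (- s); set P := ketbra tau tau.
have aP : adj P = P by rewrite /P /ketbra adjM adjK.
have PP : P *m P = P by rewrite /P /ketbra mulmxA -(mulmxA tau) unitE // mulmx1.
have kk : k^* * k = k + k^*.
  have e := cos2Dsin2 (- s).
  rewrite /k conjE /expi; apply/eqP; rewrite eq_complex /=; apply/andP; split; apply/eqP.
    nra.
  ring.
rewrite adjB adj1 adjZ aP mulmxBl mul1mx !mulmxBr mulmx1 -!scalemxAl -!scalemxAr PP scalerA kk.
rewrite -scalerBl (_ : k^* - (k + k^*) = - k); last by ring.
by rewrite scaleNr opprK subrK.
Qed.

Lemma refl_dens (s : R) (tau : 'cV[C]_d) sig : unit_ket tau -> dens sig -> dens (refl_channel s tau sig).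
Proof.
move=> ht [hs ps ts]; rewrite /refl_channel; split.
- by rewrite !adjM adjK hs mulmxA.
- by move=> v; rewrite q_conj; apply: ps.
- by rewrite mxtrace_mulC mulmxA Erefl_unitary // mul1mx.
Qed.

Section Sub.
Variables tau psi0 : 'cV[C]_d.
Local Notation V := (in_Hrel tau psi0).
Definition cols (M : 'M[C]_d) := forall j, V (col j M).

Lemma V0 : V 0.
Proof. by exists 0, 0; rewrite !scale0r addr0. Qed.

Lemma VD u v : V u -> V v -> V (u + v).
Proof.
move=> [a1 [b1 ->]] [a2 [b2 ->]]; exists (a1 + a2), (b1 + b2).
by rewrite !scalerDl addrACA.
Qed.

Lemma VZ c u : V u -> V (c *: u).
Proof. by move=> [a [b ->]]; exists (c * a), (c * b); rewrite scalerDr !scalerA. Qed.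

Lemma VN u : V u -> V (- u).
Proof. by move=> h; rewrite -scaleN1r; apply: VZ. Qed.

Lemma Vtau : V tau.
Proof. by exists 1, 0; rewrite scale1r scale0r addr0. Qed.

Lemma Vmul n (A : 'M[C]_(d, n)) (w : 'cV[C]_n) : (forall j, V (col j A)) -> V (A *m w).
Proof.
move=> hA.
have -> : A *m w = \sum_k w k ord0 *: col k A.
  apply/matrixP => i j; rewrite !mxE summxE; apply: eq_bigr => k _.
  by rewrite !mxE !ord1 mulrC.
by apply: (big_ind V) => //; [exact: V0 | exact: VD | move=> k _; apply: VZ].
Qed.

Lemma col_mul n (A : 'M[C]_(d, n)) (B : 'M[C]_(n, d)) j : col j (A *m B) = A *m col j B.
Proof. by rewrite !colE mulmxA. Qed.

Lemma cols_mul (A B : 'M[C]_d) : cols A -> cols (A *m B).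
Proof. by move=> hA j; rewrite col_mul; apply: Vmul. Qed.

Lemma cols_D (A B : 'M[C]_d) : cols A -> cols B -> cols (A + B).
Proof.
move=> hA hB j; have -> : col j (A + B) = col j A + col j B.
  by apply/matrixP => i k; rewrite !mxE.
exact: VD.
Qed.

Lemma cols_Z c (A : 'M[C]_d) : cols A -> cols (c *: A).
Proof.
move=> hA j; have -> : col j (c *: A) = c *: col j A.
  by apply/matrixP => i k; rewrite !mxE.
exact: VZ.
Qed.

Lemma cols_B (A B : 'M[C]_d) : cols A -> cols B -> cols (A - B).
Proof. move=> hA hB; apply: cols_D => //; rewrite -scaleN1r; exact: cols_Z. Qed.

Lemma cols_E (s : R) M : cols M -> cols (Erefl s tau *m M).
Proof.
move=> hM; rewrite /Erefl mulmxBl mul1mx -scalemxAl /ketbra -mulmxA.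
apply: cols_B => //; apply: cols_Z => j; rewrite col_mul; apply: Vmul => k.
have -> : col k tau = tau by apply/matrixP => i l; rewrite !mxE !ord1.
exact: Vtau.
Qed.

Lemma refl_cols (s : R) sig : cols sig -> cols (refl_channel s tau sig).
Proof. by move=> h; rewrite /refl_channel -mulmxA; apply: cols_E; apply: cols_mul. Qed.

Lemma dme_cols (s : R) rho sig : cols rho -> cols sig -> cols (dme_channel s rho sig).
Proof.
move=> hr hs; rewrite /dme_channel.
apply: cols_D; last exact: cols_Z.
apply: cols_B; first exact: cols_Z.
by apply: cols_Z; apply: cols_B; apply: cols_mul.
Qed.
End Sub.
End S.

Theorem corollary1 (R : realType) (d : nat) (tau psi0 : 'cV[R[i]]_d)
  (sched : nat -> seq (qdp_op R)) :
  unit_ket tau -> unit_ket psi0 ->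
  S_rel tau psi0 (ketbra psi0 psi0) ->
  forall n : nat, S_rel tau psi0 (qdp_state tau psi0 sched n).
Proof.
move=> ht _ [hd0 hc0].
have step : forall (rho : 'M[R[i]]_d), dens rho -> cols tau psi0 rho ->
    forall os acc, dens acc -> cols tau psi0 acc ->
    dens (apply_ops tau rho os acc) /\ cols tau psi0 (apply_ops tau rho os acc).
  move=> rho hr hrc; elim => [|o os IH] acc ha hac //=.
  case: o => s /=; apply: IH.
  - exact: refl_dens.
  - exact: refl_cols.
  - exact: dme_dens.
  - exact: dme_cols.
have inv : forall n, dens (qdp_state tau psi0 sched n) /\ cols tau psi0 (qdp_state tau psi0 sched n).
  elim => [|n [hd hc]] /=.
    by split => //; case: hd0 => h1 h2 h3; split.
  exact: step.
move=> n; case: (inv n) => [[h1 h2 h3] hc]; split => //.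
Qed.
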